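(* Let $k\ge1$, $\beta\ge1$ integers, and consider weighted $k$-server on a uniform metric space $S$ with $n_{k-1}+1$ points and server weights $1,\beta,\ldots,\beta^{k-1}$, from an arbitrary initial configuration. Then the expected optimal (offline) cost of serving the random request sequence generated by $\mathsf{adversary}(k)$ is at most $\beta^{k-1}+\big((n_{k-1}+1)\cdot H(n_{k-1}+1)-1\big)\cdot c_{k-1}$, where $c_0=0$ and $c_\ell=\beta^{\ell-1}+\beta\cdot(\lceil n_{\ell-1}/2\rceil+1)\cdot c_{\ell-1}$ for $\ell>0$.
   Context: $H(n)=\sum_{i=1}^n1/i$. The sequence $n_0,n_1,\ldots$ is defined by $n_0=1$ and $n_i=\left(\lceil n_{i-1}/2\rceil+1\right)\left(\lfloor n_{i-1}/2\rfloor+1\right)$ for $i>0$. Weighted $k$-server on a uniform metric: $k$ servers with given weights sit at points; each requested point must be occupied by a server after serving it; moving a server of weight $w$ to a different point costs $w$; the optimal offline cost is the minimum cost of serving the whole (known) sequence. For every $\ell\ge1$ and every set $P$ with $|P|=n_\ell$, fix a set system $\mathcal{Q}(\ell,P)\subseteq 2^P$ consisting of $\lceil n_{\ell-1}/2\rceil+1$ sets each of size $n_{\ell-1}$, such that every $p\in P$ is missed by some set of $\mathcal{Q}(\ell,P)$, and for every $p\in P$ there is $q\in P$ with every set of $\mathcal{Q}(\ell,P)$ containing $p$ or $q$ (such systems exist). The procedure $\mathsf{strategy}(\ell,P)$ (with $|P|=n_\ell$) is: if $\ell=0$, request the unique point of $P$; if $\ell>0$, repeat $\beta\cdot(\lceil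 n_{\ell-1}/2\rceil+1)$ times: pick $P'$ uniformly at random from $\mathcal{Q}(\ell,P)$, independently of all previous random choices, and run $\mathsf{strategy}(\ell-1,P')$. The procedure $\mathsf{adversary}(k)$ on $S$ ($|S|=n_{k-1}+1$, all points initially unmarked) is: repeatedly pick a point $p$ uniformly at random from $S$ (independently) and mark it; if some point of $S$ is still unmarked, run $\mathsf{strategy}(k-1,S\setminus\{p\})$ and continue; otherwise stop. *)

(* Defs.v *)
From HB Require Import structures.
From mathcomp Require Import all_boot all_order all_algebra.
From mathcomp Require Import boolp classical_sets reals constructive_ereal ereal.
Set Implicit Arguments. Unset Strict Implicit. Unset Printing Implicit Defensive.
Import Order.TTheory GRing.Theory Num.Theory.

Fixpoint nn (i : nat) : nat :=
  match i with
  | 0 => 1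
  | i'.+1 => (uphalf (nn i') + 1) * ((nn i')./2 + 1)
  end.

Fixpoint cc (beta l : nat) : nat :=
  match l with
  | 0 => 0
  | l'.+1 => beta ^ l' + beta * (uphalf (nn l') + 1) * cc beta l'
  end.

Definition harmonic {R : numFieldType} (n : nat) : R :=
  (\sum_(i < n) (i.+1%:R)^-1)%R.

Definition valid_Q (T : finType) (Q : nat -> {set T} -> {set {set T}}) : Prop :=
  forall (l : nat) (P : {set T}), 1 <= l -> #|P| = nn l ->
    [/\ #|Q l P| = uphalf (nn l.-1) + 1,
        (forall A, A \in Q l P -> A \subset P /\ #|A| = nn l.-1),
        (forall p, p \in P -> exists2 A, A \in Q l P & p \notin A) &
        (forall p, p \in P -> exists2 q, q \in P &
            forall A, A \in Q l P -> (p \in A) || (q \in A))].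

Section WeightedKServer.
Variables (T : finType) (k beta : nat).

(* A configuration assigns a point to each server i < k; server i has weight beta^i. *)
Definition config := {ffun 'I_k -> T}.

(* cost of going from configuration c to c' : every server that changes
   position pays its weight (uniform metric) *)
Definition movecost (c c' : config) : nat :=
  \sum_(i < k | c i != c' i) beta ^ i.

(* minimum on option nat, None standing for +infinity *)
Definition omin (x y : option nat) : option nat :=
  match x, y with
  | None, _ => y
  | _, None => x
  | Some a, Some b => Some (minn a b)
  end.

(* Optimal offline cost of serving sigma from configuration c:
   minimum, over all sequences of configurations c_1..c_m with the t-th request
   occupied in c_t, of the total moving cost (dynamic programming form).
   None = no feasible schedule (only possible when k = 0). *)
Fixpoint opt (c : config) (sigma : seq T) : option nat :=
  match sigma with
  | [::] => Some 0
  | r :: rs =>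
      \big[omin/None]_(c' : config | r \in codom c')
         omap (addn (movecost c c')) (opt c' rs)
  end.

Variable R : realType.
Variable Q : nat -> {set T} -> {set {set T}}.

(* Randomized request-generating procedures are given by their expectation
   transformers: [strat l P f h] is the expected value of f applied to the
   full request sequence, when the requests produced so far are h and then
   strategy(l,P) is run and its requests appended, f being the (expected)
   value of the continuation. *)
Fixpoint strat (l : nat) (P : {set T}) (f : seq T -> R) (h : seq T) : R :=
  match l with
  | 0 => f (h ++ enum P)   (* |P| = n_0 = 1: request its unique point *)
  | l'.+1 =>
      iter (beta * (uphalf (nn l') + 1))
        (fun g h' => (#|Q l P|%:R)^-1 * \sum_(A in Q l P) strat l' A g h')%R
        f h
  end.

(* adversary(k) truncated to at most [fuel] marking rounds: runs that have not
   stopped within [fuel] rounds contribute 0. M = set of marked points. *)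
Fixpoint adv (fuel : nat) (M : {set T}) (f : seq T -> R) (h : seq T) : R :=
  match fuel with
  | 0 => 0%R
  | fuel'.+1 =>
      ((#|T|%:R)^-1 * \sum_(p : T)
         (if p |: M == [set: T] then f h
          else strat k.-1 [set~ p] (adv fuel' (p |: M) f) h))%R
  end.

(* Expected optimal offline cost of the random request sequence produced by
   adversary(k) from initial configuration c0: the expectation of a
   nonnegative random variable over the countably many terminating runs,
   i.e. the supremum of its truncated (partial) expectations. *)
Definition expected_opt (c0 : config) : \bar R :=
  ereal_sup [set ((adv fuel finset.set0 (fun s => (odflt 0 (opt c0 s))%:R) [::])%:E)
            | fuel in [set: nat]]%classic.

End WeightedKServer.

(* Main.v *)
Require Import Defs.
From HB Require Import structures.
From mathcomp Require Import all_boot all_order all_algebra.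
From mathcomp Require Import boolp classical_sets reals constructive_ereal ereal.
From mathcomp Require Import ring.
Import Order.TTheory GRing.Theory Num.Theory.
Set Implicit Arguments. Unset Strict Implicit. Unset Printing Implicit Defensive.

Lemma omin_big_le (I : eqType) (s : seq I) (P : pred I) (F : I -> option nat) i b :
  i \in s -> P i -> F i = Some b ->
  exists a, \big[omin/None]_(j <- s | P j) F j = Some a /\ a <= b.
Proof.
elim: s => [//|x s IH]; rewrite inE big_cons => /orP[/eqP <-|His] Pi Fi.
  rewrite Pi Fi; case: (\big[omin/None]_(j <- s | P j) F j) => [a|] /=.
    by exists (minn b a); rewrite geq_minl.
  by exists b.
have [a [-> ha]] := IH His Pi Fi.
case: (P x) => //; last by exists a.
case: (F x) => [c|] /=; last by exists a.
by exists (minn c a); split => //; rewrite (leq_trans (geq_minr _ _) ha).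
Qed.

Lemma omin_big_ex (I : eqType) (s : seq I) (P : pred I) (F : I -> option nat) a :
  \big[omin/None]_(j <- s | P j) F j = Some a ->
  exists2 j, P j & F j = Some a.
Proof.
elim: s a => [|x s IH] a; first by rewrite big_nil.
rewrite big_cons; case Px: (P x); last exact: IH.
case Fx: (F x) => [c|] /=; last exact: IH.
case E: (\big[omin/None]_(j <- s | P j) F j) => [d|] /=; last first.
  by move=> [<-]; exists x.
move=> [<-]; rewrite /minn; case: ltnP => _.
  by exists x.
exact: IH.
Qed.

Section OptLemmas.
Variables (T : finType) (k beta : nat).
Implicit Types (c : config T k).

Lemma movecost_tri c c1 c2 :
  movecost beta c c2 <= movecost beta c c1 + movecost beta c1 c2.
Proof.
rewrite /movecost (big_mkcond (fun i => c i != c2 i)) [X in _ <= X + _]big_mkcond.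
rewrite [X in _ <= _ + X]big_mkcond -big_split /=.
apply: leq_sum => i _.
case: (eqVneq (c i) (c2 i)) => //= H.
case: (eqVneq (c i) (c1 i)) => //= H1; last by rewrite leq_addr.
by rewrite -H1 H.
Qed.

Lemma movecost0 c : movecost beta c c = 0.
Proof. by rewrite /movecost big1 // => i; rewrite eqxx. Qed.

Lemma movecost_upd c (i : 'I_k) y :
  movecost beta c [ffun j => if j == i then y else c j] <= beta ^ i.
Proof.
rewrite /movecost (big_mkcond (fun j => c j != _)) /=.
rewrite (bigD1 i) //= big1 ?addn0.
  by case: ifP.
move=> j /negbTE ji; rewrite ffunE ji eqxx //.
Qed.

Lemma opt_cand c c' r rs b :
  r \in codom c' -> opt beta c' rs = Some b ->
  exists a, opt beta c (r :: rs) = Some a /\ a <= movecost beta c c' + b.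
Proof.
move=> Hr Ho; rewrite /=.
apply: (omin_big_le (i := c')) => //; first exact: mem_index_enum.
by rewrite Ho.
Qed.

Lemma opt_ach c r rs a :
  opt beta c (r :: rs) = Some a ->
  exists c', [/\ r \in codom c' & exists b, opt beta c' rs = Some b /\ a = movecost beta c c' + b].
Proof.
move=> /= /omin_big_ex [c' Hr].
case Ho: (opt beta c' rs) => [b|] //= [<-].
by exists c'; split => //; exists b.
Qed.

Lemma opt_tri c c' rs b :
  opt beta c' rs = Some b ->
  exists a, opt beta c rs = Some a /\ a <= movecost beta c c' + b.
Proof.
case: rs => [|r rs] /=.
  by move=> [<-]; exists 0.
move=> Ho; have [c'' [Hr [b'' [Ho'' ->]]]] := opt_ach Ho.
have [a [Ha Hle]] := opt_cand c Hr Ho''.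
exists a; split => //; apply: (leq_trans Hle).
by rewrite addnA leq_add2r movecost_tri.
Qed.

Definition Good c0 h c m := forall rest b, opt beta c rest = Some b ->
  exists a, opt beta c0 (h ++ rest) = Some a /\ a <= m + b.

Lemma Good0 c0 c : Good c0 [::] c (movecost beta c0 c).
Proof. by move=> rest b Ho; apply: opt_tri. Qed.

Lemma Good_mono c0 h c m m' : m <= m' -> Good c0 h c m -> Good c0 h c m'.
Proof.
move=> Hm G rest b Ho; have [a [Ha Hle]] := G _ _ Ho.
by exists a; split => //; rewrite (leq_trans Hle) // leq_add2r.
Qed.

Lemma Good_move c0 h c c' m :
  Good c0 h c m -> Good c0 h c' (m + movecost beta c c').
Proof.
move=> G rest b Ho; have [a' [Ha' Hle']] := opt_tri c Ho.
have [a [Ha Hle]] := G _ _ Ha'.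
by exists a; split => //; rewrite (leq_trans Hle) // -addnA leq_add2l.
Qed.

Lemma Good_serve c0 h c m r :
  r \in codom c -> Good c0 h c m -> Good c0 (h ++ [:: r]) c m.
Proof.
move=> Hr G rest b Ho; have [a' [Ha' Hle']] := opt_cand c Hr Ho.
rewrite movecost0 add0n in Hle'.
have [a [Ha Hle]] := G _ _ Ha'.
exists a; split; first by rewrite -catA.
by rewrite (leq_trans Hle) // leq_add2l.
Qed.

Lemma Good_fin c0 h c m : Good c0 h c m -> exists a, opt beta c0 h = Some a /\ a <= m.
Proof.
move=> G; have [a [Ha Hle]] := G [::] 0 erefl.
by exists a; rewrite -Ha cats0; rewrite addn0 in Hle.
Qed.

End OptLemmas.

Fixpoint genP (T : finType) (beta : nat) (Q : nat -> {set T} -> {set {set T}})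
  (l : nat) (P : {set T}) (Phi : seq T -> Prop) (h : seq T) : Prop :=
  match l with
  | 0 => Phi (h ++ enum P)
  | l'.+1 =>
      iter (beta * (uphalf (nn l') + 1))
        (fun G h' => forall A, A \in Q l P -> genP beta Q l' A G h')
        Phi h
  end.

Section GenP.
Variables (T : finType) (beta : nat) (Q : nat -> {set T} -> {set {set T}}).

Lemma genP_mono l : forall P (Phi Psi : seq T -> Prop) h,
  (forall h', Phi h' -> Psi h') -> genP beta Q l P Phi h -> genP beta Q l P Psi h.
Proof.
elim: l => [|l IH] P Phi Psi h H /=; first exact: H.
elim: (beta * _) h => [|n IHn] h /=; first exact: H.
move=> G A HA; apply: IH (G A HA) => h'; exact: IHn.
Qed.

Lemma genP_true l : forall P (Phi : seq T -> Prop) h,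
  (forall h', Phi h') -> genP beta Q l P Phi h.
Proof.
elim: l => [|l IH] P Phi h H /=; first exact: H.
elim: (beta * _) h => [|n IHn] h /=; first exact: H.
move=> A HA; apply: IH => h'; exact: IHn.
Qed.

Lemma genP_forall (I : Type) l : forall P (Phi : I -> seq T -> Prop) h,
  (forall i, genP beta Q l P (Phi i) h) ->
  genP beta Q l P (fun h' => forall i, Phi i h') h.
Proof.
elim: l => [|l IH] P Phi h /=; first by [].
elim: (beta * _) h => [|n IHn] h /=; first by [].
move=> H A HA.
apply: (genP_mono (Phi := fun h' => forall i, iter n (fun G h'0 =>
    forall A0, A0 \in Q l.+1 P -> genP beta Q l A0 G h'0) (Phi i) h')).
  by move=> h'; apply: IHn.
by apply: IH => i; apply: H.
Qed.

Variable R : realType.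
Local Open Scope ring_scope.

Lemma avg_le (S : {set {set T}}) (v : {set T} -> R) (C : R) :
  0 <= C -> (forall A, A \in S -> v A <= C) ->
  (#|S|%:R)^-1 * \sum_(A in S) v A <= C.
Proof.
move=> C0 H.
have Hs : \sum_(A in S) v A <= \sum_(A in S) C by apply: ler_sum.
rewrite sumr_const in Hs.
case: (posnP #|S|) => [->|Sp]; first by rewrite invr0 mul0r.
have Sp' : (0 : R) < #|S|%:R by rewrite ltr0n.
rewrite -(ler_pM2l Sp') mulrA mulfV ?mul1r; last by rewrite gt_eqF.
by rewrite mulr_natl.
Qed.

Lemma strat_le l : forall P (f : seq T -> R) (Phi : seq T -> Prop) h C,
  0 <= C -> (forall h', Phi h' -> f h' <= C) ->
  genP beta Q l P Phi h -> strat beta Q l P f h <= C.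
Proof.
elim: l => [|l IH] P f Phi h C C0 H /=; first exact: H.
move: (beta * _)%N => N.
elim: N h => [|n IHn] h /=; first exact: H.
move=> G; apply: avg_le => // A HA.
exact: IH (G A HA).
Qed.

End GenP.

Section StratGood.
Variables (T : finType) (k beta : nat) (Q : nat -> {set T} -> {set {set T}}).
Variable c0 : config T k.
Hypothesis vQ : valid_Q Q.

Lemma card1_enum (P : {set T}) x : #|P| = 1 -> x \in P -> enum P = [:: x].
Proof.
move=> /eqP /cards1P [y ->]; rewrite inE => /eqP ->; exact: enum_set1.
Qed.

Lemma strat_good l : l < k -> forall (P : {set T}) x (c : config T k) h m,
  #|P| = nn l -> x \in P ->
  (exists j : 'I_k, l <= j /\ c j = x) ->
  Good beta c0 h c m ->
  genP beta Q l P (fun h' => exists c' : config T k,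
     Good beta c0 h' c' (m + cc beta l) /\ forall j : 'I_k, l <= j -> c' j = c j) h.
Proof.
elim: l => [|l IH] lk P x c h m HP Hx [j0 [Hj0 Hcj0]] G /=.
  rewrite (card1_enum HP Hx); exists c; split => //.
  rewrite addn0; apply: Good_serve => //; rewrite -Hcj0; exact: codom_f.
have [HQc HQsub Hmiss Hcov] := vQ (P := P) (l := l.+1) erefl HP.
have [y Hy Hxy] := Hcov x Hx.
pose il : 'I_k := Ordinal (ltnW lk).
pose c1 : config T k := [ffun j => if j == il then y else c j].
have G1 : Good beta c0 h c1 (m + beta ^ l).
  refine (Good_mono _ (Good_move (c' := c1) G)).
  by rewrite leq_add2l (movecost_upd beta c il y).
have Hc1 : forall j : 'I_k, l < j -> c1 j = c j.
  move=> j lj; rewrite ffunE; case: eqP => // Ej.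
  by move: lj; rewrite Ej /= ltnn.
pose Phi := (fun h' => exists c' : config T k,
     Good beta c0 h' c' (m + cc beta l.+1) /\ forall j : 'I_k, l < j -> c' j = c j).
have claim : forall n h (c' : config T k) m',
   (forall j : 'I_k, l <= j -> c' j = c1 j) -> Good beta c0 h c' m' ->
   m' + n * cc beta l <= m + cc beta l.+1 ->
   iter n (fun G h' => forall A, A \in Q l.+1 P -> genP beta Q l A G h') Phi h.
  elim => [|n IHn] h' c' m' Ag G' Hm /=.
    exists c'; split.
      by refine (Good_mono _ G'); rewrite mul0n addn0 in Hm.
    move=> j lj; rewrite Ag ?Hc1 //; exact: ltnW.
  move=> A HA.
  have [Asub Acard] := HQsub A HA.
  have Hz : exists2 z, z \in A & exists j : 'I_k, l <= j /\ c' j = z.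
    case/orP: (Hxy A HA) => [xA|yA].
      exists x => //; exists j0; split; first exact: ltnW.
      by rewrite Ag ?Hc1 //; exact: ltnW.
    exists y => //; exists il; split => //.
    by rewrite Ag // ffunE eqxx.
  have [z zA Hcz] := Hz.
  apply: genP_mono (IH (ltnW lk) A z c' h' m' Acard zA Hcz G').
  move=> h'' [c'' [G'' Ag'']].
  apply: (IHn h'' c'' (m' + cc beta l)) => //.
    by move=> j lj; rewrite Ag'' // Ag.
  by rewrite -addnA -mulSn.
apply: (claim _ h c1 (m + beta ^ l)) => //.
by rewrite /= -addnA leq_add2l.
Qed.

End StratGood.

Section AdvBound.
Local Open Scope ring_scope.
Variables (R : realType) (T : finType) (k' beta : nat)
  (Q : nat -> {set T} -> {set {set T}}) (c0 : config T k'.+1).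
Hypothesis vQ : valid_Q Q.
Hypothesis HT : #|T| = (nn k').+1.

Let N := #|T|.
Let K : 'I_k'.+1 := ord_max.
Let f := fun s => ((odflt 0 (opt beta c0 s))%:R : R).
Let Rf (j : nat) : R := N%:R * harmonic (N - j) - 1.
Let cK := cc beta k'.

Definition Inv (M : {set T}) h m := forall q, q \notin M ->
  exists c : config T k'.+1, c K = q /\ Good beta c0 h c m.

Lemma harmonicS n : harmonic n.+1 = harmonic n + (n.+1%:R)^-1 :> R.
Proof. by rewrite /harmonic big_ord_recr. Qed.

Lemma harmonic_ge0 n : 0 <= harmonic n :> R.
Proof. by apply: sumr_ge0 => i _; rewrite invr_ge0 ler0n. Qed.

Lemma harmonic_ge1 n : 1 <= harmonic n.+1 :> R.
Proof.
rewrite /harmonic big_ord_recl /= invr1 lerDl.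
by apply: sumr_ge0 => i _; rewrite invr_ge0 ler0n.
Qed.

Lemma Rf_ge0 j : (j < N)%N -> 0 <= Rf j.
Proof.
move=> jN; rewrite /Rf subr_ge0.
have -> : (N - j = (N - j).-1.+1)%N by rewrite prednK // subn_gt0.
have N1 : (1 : R) <= N%:R by rewrite ler1n (leq_ltn_trans _ jN).
apply: (le_trans N1); rewrite -{1}[N%:R]mulr1 ler_pM2l ?harmonic_ge1 //.
by rewrite (lt_le_trans ltr01).
Qed.

Lemma Rf_ge_m1 j : 0 <= 1 + Rf j.
Proof.
by rewrite /Rf addrC subrK mulr_ge0 ?ler0n ?harmonic_ge0.
Qed.

Lemma Rf_N : Rf N = -1.
Proof. by rewrite /Rf subnn /harmonic big_ord0 mulr0 sub0r. Qed.

Lemma arith (j n' : nat) (H : R) :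
  let x := (n'.+1)%:R : R in
  j%:R * (1 + ((j%:R + x) * (H + x^-1) - 1)) + x * (1 + ((j%:R + x) * H - 1))
  = (j%:R + x) * ((j%:R + x) * (H + x^-1) - 1).
Proof.
move=> x; have x0 : x != 0 by rewrite /x pnatr_eq0.
by field.
Qed.

Lemma sum_bound (M : {set T}) : (#|M| < N)%N ->
  \sum_(p : T) (1 + Rf #|p |: M|) = N%:R * Rf #|M|.
Proof.
move=> MN.
rewrite (bigID (fun p => p \in M)) /=.
rewrite (eq_bigr (fun _ => 1 + Rf #|M|)); last first.
  by move=> p pM; rewrite cardsU1 pM.
rewrite [X in _ + X](eq_bigr (fun _ => 1 + Rf #|M|.+1)); last first.
  by move=> p /negPf pM; rewrite cardsU1 pM.
rewrite sumr_const.
rewrite (eq_bigl (fun p => p \in ~: M)); last by move=> p; rewrite !inE.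
have Hc : #|~: M| = (N - #|M|)%N by rewrite /N -(cardsC M) addKn.
rewrite sumr_const Hc.
set j := #|M|.
have [n' Hn'] : exists n', (N - j = n'.+1)%N.
  by exists (N - j).-1; rewrite prednK // subn_gt0.
have Hn2 : (N - j.+1 = n')%N by rewrite subnS Hn'.
have HN : N = (j + n'.+1)%N by rewrite -Hn' subnKC // ltnW.
rewrite /Rf Hn' Hn2 harmonicS.
rewrite -[(1 + _) *+ j]mulr_natr -[(1 + _) *+ n'.+1]mulr_natr.
rewrite HN natrD.
have x0 : (n'.+1)%:R != 0 :> R by rewrite pnatr_eq0.
by field.
Qed.

Lemma adv_bound fuel : forall (M : {set T}) h m, (#|M| < N)%N -> Inv M h m ->
  adv k'.+1 beta Q fuel M f h <= m%:R + cK%:R * Rf #|M|.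
Proof.
elim: fuel => [|fuel IH] M h m MN HI /=.
  by rewrite addr_ge0 ?mulr_ge0 ?ler0n ?Rf_ge0.
have bnd : forall p : T,
  (if p |: M == [set: T] then f h
   else strat beta Q k' [set~ p] (adv k'.+1 beta Q fuel (p |: M) f) h)
  <= m%:R + cK%:R * (1 + Rf #|p |: M|).
  move=> p; case: ifP => [/eqP E|NE].
    rewrite E cardsT -/N Rf_N addrN mulr0 addr0.
    have pM : p \notin M.
      apply/negP => pM; have := cardsU1 p M; rewrite pM E cardsT add0n => HH.
      by move: MN; rewrite /N HH ltnn.
    have [c [_ Gc]] := HI p pM.
    have [a [Ha Hle]] := Good_fin Gc.
    by rewrite /f Ha /= ler_nat.
  have pMN : (#|p |: M| < N)%N.
    rewrite /N -cardsT ltn_neqAle (subset_leq_card (finset.subsetT _)) andbT.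
    apply/negP => /eqP E; move/negbT: NE; rewrite eqEcard finset.subsetT /= E leqnn //.
  apply: (@strat_le T beta Q R k' [set~ p] _ (fun h' => Inv (p |: M) h' (m + cK)%N)).
  - by rewrite addr_ge0 ?mulr_ge0 ?ler0n ?Rf_ge_m1.
  - move=> h' Hh'; apply: le_trans (IH _ _ _ pMN Hh') _.
    by rewrite le_eqVlt; apply/orP; left; apply/eqP; rewrite natrD; ring.
  apply: (genP_forall (Phi := fun q h' => q \notin p |: M ->
    exists c : config T k'.+1, c K = q /\ Good beta c0 h' c (m + cK)%N)) => q.
  case: (boolP (q \in p |: M)) => qpM.
    by apply: genP_true => h'.
  move: qpM; rewrite in_setU1 negb_or => /andP[qp qM].
  have [c [cK' Gc]] := HI q qM.
  have Hq : q \in [set~ p] by rewrite in_setC1.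
  have Hcard : #|[set~ p]| = nn k' by rewrite cardsC1 HT.
  apply: genP_mono (strat_good vQ (ltnSn k') Hcard Hq _ Gc).
    move=> h' [c' [G' A']] _; exists c'; split => //.
    by rewrite A' //= cK'.
  by exists K; split.
have HN0 : (0 : R) < N%:R by rewrite ltr0n (leq_ltn_trans _ MN).
rewrite -(ler_pM2l HN0) mulrA mulfV ?gt_eqF // mul1r.
apply: le_trans (ler_sum _ (fun p _ => bnd p)) _.
rewrite big_split /= sumr_const (_ : #|xpredT| = N) //.
rewrite -mulr_sumr sum_bound // -mulr_natl.
by rewrite le_eqVlt; apply/orP; left; apply/eqP; ring.
Qed.

End AdvBound.

Unset Implicit Arguments.
Theorem lemma7 (R : realType) (T : finType) (k beta : nat)
  (Q : nat -> {set T} -> {set {set T}}) (c0 : config T k) :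
  1 <= k -> 1 <= beta ->
  #|T| = (nn k.-1).+1 ->
  valid_Q Q ->
  (expected_opt beta R Q c0 <=
   ((beta ^ k.-1)%:R +
    (((nn k.-1).+1)%:R * harmonic (nn k.-1).+1 - 1) * (cc beta k.-1)%:R)%:E)%E.
Proof.
case: k c0 => [//|k'] c0 _ _ /= HT vQ.
apply: ge_ereal_sup => _ [fuel _ <-].
rewrite lee_fin.
have H : (#|@finset.set0 T| < #|T|)%N -> Inv beta c0 finset.set0 [::] (beta ^ k') ->
  (adv k'.+1 beta Q fuel finset.set0 (fun s => ((odflt 0 (opt beta c0 s))%:R : R)) [::] <=
   (beta ^ k')%:R + (cc beta k')%:R * (#|T|%:R * harmonic (#|T| - #|@finset.set0 T|) - 1))%R
  := @adv_bound R T k' beta Q c0 vQ HT fuel finset.set0 [::] (beta ^ k').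
rewrite finset.cards0 subn0 HT in H.
apply: le_trans (H _ _) _.
- by [].
- move=> q _.
  exists [ffun j => if j == ord_max then q else c0 j]; split.
    by rewrite ffunE eqxx.
  refine (Good_mono _ (@Good0 _ _ beta c0 _)).
  exact: (movecost_upd beta c0 ord_max q).
by rewrite mulrC.
Qed.
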